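(* Let $\varphi$ be a finite conjunction of literals of the two forms $x\in y$ and $x = y\setminus z$ (with $x,y,z$ set variables), with finite set of variables $\mathrm{Vars}(\varphi)$. Let $M$ be a set assignment over $\mathrm{Vars}(\varphi)$ satisfying $\varphi$; let $\bar x,\bar y\in\mathrm{Vars}(\varphi)$, let $\overline{M}$ be a set assignment over $\mathrm{Vars}(\varphi)$ satisfying $\varphi$ with $\overline{M}\bar x\neq \overline{M}\bar y$, and let $\mathfrak{t}$ be a set belonging to exactly one of $\overline{M}\bar x$, $\overline{M}\bar y$. Fix a set $\mathfrak{s}$ with $\mathrm{rk}(\mathfrak{s})>\mathrm{rk}(M)$. Define $\mathsf{V}_0=\{u\in\mathrm{Vars}(\varphi)\mid \mathfrak{t}\in\overline{M}u\}$; $\mathsf{V}_n=\{u\in\mathrm{Vars}(\varphi)\mid Mu\cap\{Mw\mid w\in\mathsf{V}_{n-1}\}\neq\emptyset\}$ for $n\ge1$; $M_0v=Mv\cup\{\mathfrak{s}\}$ if $v\in\mathsf{V}_0$ and $M_0v=Mv$ otherwise; for $n\ge1$, $M_nv=M_{n-1}v\cup\{M_{n-1}u\mid u\in\mathsf{V}_{n-1},\ Mu\in Mv\}$ if $v\in\mathsf{V}_n$ and $M_nv=M_{n-1}v$ otherwise. Then for all $x\in\mathrm{Vars}(\varphi)$, $n\in\mathbb{N}$ and every set $\mathfrak{q}\in M_nx$, if $\mathrm{rk}(\mathfrak{q})<\mathrm{rk}(\mathfrak{s})$ then $\mathfrak{q}\in Mx$.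
   Context: A set assignment is a map from a finite set of set variables into the von Neumann universe $\mathcal{V}=\bigcup_\alpha\mathcal{V}_\alpha$, $\mathcal{V}_\alpha=\bigcup_{\beta<\alpha}\mathcal{P}(\mathcal{V}_\beta)$; it satisfies $x\in y$ iff $Mx\in My$ and $x=y\setminus z$ iff $Mx=My\setminus Mz$. The rank $\mathrm{rk}(s)$ of a set $s$ is the least ordinal $\alpha$ with $s\subseteq\mathcal{V}_\alpha$, and $\mathrm{rk}(M)=\max\{\mathrm{rk}(Mx)\mid x\in\mathrm{dom}(M)\}$. *)

(* Defs.v *)
(* Sets are modelled by Aczel's well-founded trees
   (a type-theoretic model of the cumulative hierarchy), with
   extensional equality EQ and membership IN. *)
From Stdlib Require Import List ClassicalEpsilon.
Import ListNotations.

Inductive Ens : Type := sup (A : Type) (f : A -> Ens).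

Definition idx (x : Ens) : Type := match x with sup A _ => A end.
Definition elt (x : Ens) : idx x -> Ens := match x with sup _ f => f end.

Fixpoint EQ (x y : Ens) : Prop :=
  match x, y with
  | sup A f, sup B g =>
      (forall a, exists b, EQ (f a) (g b)) /\ (forall b, exists a, EQ (f a) (g b))
  end.

Definition IN (x y : Ens) : Prop := exists b : idx y, EQ x (elt y b).

Definition singleton (x : Ens) : Ens := sup unit (fun _ => x).
Definition union (x y : Ens) : Ens :=
  sup (idx x + idx y)%type
      (fun p => match p with inl a => elt x a | inr b => elt y b end).
Definition setdiff (x y : Ens) : Ens :=
  sup {a : idx x | ~ IN (elt x a) y} (fun p => elt x (proj1_sig p)).
Definition succ (x : Ens) : Ens := union x (singleton x).

(* von Neumann rank, as a von Neumann ordinal: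
   rk(s) = sup { rk(t) + 1 | t in s } = U_{t in s} succ (rk t).
   Ordinal comparison rk(q) < rk(s) is membership IN (rk q) (rk s). *)
Fixpoint rk (x : Ens) : Ens :=
  match x with
  | sup A f =>
      sup {a : A & idx (succ (rk (f a)))}
          (fun p => elt (succ (rk (f (projT1 p)))) (projT2 p))
  end.

Definition rk_lt (x y : Ens) : Prop := IN (rk x) (rk y).

Inductive lit (V : Type) : Type :=
| LIn : V -> V -> lit V
| LDiff : V -> V -> V -> lit V.
Arguments LIn {V} _ _.
Arguments LDiff {V} _ _ _.

Definition formula (V : Type) := list (lit V).

Definition lit_vars {V} (l : lit V) : list V :=
  match l with LIn x y => [x; y] | LDiff x y z => [x; y; z] end.

Definition occurs {V} (v : V) (phi : formula V) : Prop :=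
  exists l, In l phi /\ In v (lit_vars l).

Definition sat_lit {V} (M : V -> Ens) (l : lit V) : Prop :=
  match l with
  | LIn x y => IN (M x) (M y)
  | LDiff x y z => EQ (M x) (setdiff (M y) (M z))
  end.

Definition sat {V} (M : V -> Ens) (phi : formula V) : Prop :=
  forall l, In l phi -> sat_lit M l.

Fixpoint Vset {V} (M Mbar : V -> Ens) (t : Ens) (n : nat) (u : V) : Prop :=
  match n with
  | 0 => IN t (Mbar u)
  | S m => exists a, IN a (M u) /\ exists w, Vset M Mbar t m w /\ EQ a (M w)
  end.

Definition family {V} (P : V -> Prop) (F : V -> Ens) : Ens :=
  sup {u : V | P u} (fun p => F (proj1_sig p)).

Fixpoint Mn {V} (M Mbar : V -> Ens) (t s : Ens) (n : nat) (v : V) : Ens :=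
  match n with
  | 0 => if excluded_middle_informative (Vset M Mbar t 0 v)
         then union (M v) (singleton s) else M v
  | S m => if excluded_middle_informative (Vset M Mbar t (S m) v)
           then union (Mn M Mbar t s m v)
                      (family (fun u => Vset M Mbar t m u /\ IN (M u) (M v))
                              (fun u => Mn M Mbar t s m u))
           else Mn M Mbar t s m v
  end.

(* Main.v *)
Require Import Defs.
From Stdlib Require Import List Classical ClassicalEpsilon.

Lemma EQ_refl : forall x, EQ x x.
Proof. induction x as [A f IH]; simpl; split; intros a; exists a; apply IH. Qed.

Lemma EQ_sym : forall x y, EQ x y -> EQ y x.
Proof.
  induction x as [A f IH]; intros [B g]; simpl; intros [H1 H2]; split.
  - intros b; destruct (H2 b) as [a Ha]; exists a; apply IH; exact Ha.
  - intros a; destruct (H1 a) as [b Hb]; exists b; apply IH; exact Hb.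
Qed.

Lemma EQ_trans : forall x y z, EQ x y -> EQ y z -> EQ x z.
Proof.
  induction x as [A f IH]; intros [B g] [C h]; simpl; intros [H1 H2] [H3 H4]; split.
  - intros a; destruct (H1 a) as [b Hb]; destruct (H3 b) as [c Hc]; exists c; eauto.
  - intros c; destruct (H4 c) as [b Hb]; destruct (H2 b) as [a Ha]; exists a; eauto.
Qed.

Lemma IN_EQ_r : forall z u v, IN z u -> EQ u v -> IN z v.
Proof.
  intros z [A f] [B g] [a Ha] [H1 H2]; simpl in *.
  destruct (H1 a) as [b Hb]; exists b; simpl; eapply EQ_trans; eauto.
Qed.

Lemma IN_EQ_l : forall z z' u, IN z u -> EQ z z' -> IN z' u.
Proof.
  intros z z' u [a Ha] H; exists a; eapply EQ_trans; [apply EQ_sym; exact H| exact Ha].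
Qed.

Lemma ext : forall x y, (forall z, IN z x -> IN z y) -> (forall z, IN z y -> IN z x) -> EQ x y.
Proof.
  intros [A f] [B g] H1 H2; simpl; split.
  - intros a. destruct (H1 (f a)) as [b Hb]. exists a; apply EQ_refl. exists b; exact Hb.
  - intros b. destruct (H2 (g b)) as [a Ha]. exists b; apply EQ_refl. exists a; apply EQ_sym; exact Ha.
Qed.

Lemma IN_union : forall z x y, IN z (union x y) <-> IN z x \/ IN z y.
Proof.
  intros z x y; split.
  - intros [[a|b] H]; [left|right]; eexists; exact H.
  - intros [[a H]|[b H]]; [exists (inl a)|exists (inr b)]; exact H.
Qed.

Lemma IN_singleton : forall z x, IN z (singleton x) <-> EQ z x.
Proof. intros z x; split; [intros [[] H]; exact H | intros H; exists tt; exact H]. Qed.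

Lemma IN_succ : forall z x, IN z (succ x) <-> IN z x \/ EQ z x.
Proof. intros; unfold succ; rewrite IN_union, IN_singleton; tauto. Qed.

Lemma IN_rk : forall z A f, IN z (rk (sup A f)) <-> exists a, IN z (succ (rk (f a))).
Proof.
  intros z A f; split.
  - intros [[a c] H]; exists a; exists c; exact H.
  - intros [a [c H]]; exists (existT _ a c); exact H.
Qed.

Lemma rk_EQ : forall x y, EQ x y -> EQ (rk x) (rk y).
Proof.
  induction x as [A f IH]; intros [B g] Hxy; pose proof Hxy as [H1 H2].
  apply ext; intros z Hz; rewrite IN_rk in *; destruct Hz as [a Ha]; rewrite IN_succ in Ha.
  - destruct (H1 a) as [b Hb]; exists b; rewrite IN_succ.
    pose proof (IH a _ Hb) as E. destruct Ha as [Ha|Ha].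
    + left; eapply IN_EQ_r; eauto.
    + right; eapply EQ_trans; eauto.
  - destruct (H2 a) as [b Hb]; exists b; rewrite IN_succ.
    pose proof (EQ_sym _ _ (IH b _ Hb)) as E. destruct Ha as [Ha|Ha].
    + left; eapply IN_EQ_r; eauto.
    + right; eapply EQ_trans; eauto.
Qed.

Lemma rk_IN : forall r q, IN r q -> IN (rk r) (rk q) /\ (forall z, IN z (rk r) -> IN z (rk q)).
Proof.
  intros r [A f] [a Ha]; simpl in Ha. pose proof (rk_EQ _ _ Ha) as E. split.
  - rewrite IN_rk; exists a; rewrite IN_succ; right; exact E.
  - intros z Hz; rewrite IN_rk; exists a; rewrite IN_succ; left; eapply IN_EQ_r; eauto.
Qed.

Lemma Acc_IN : forall x y, EQ y x -> Acc IN y.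
Proof.
  induction x as [A f IH]; intros y Hy; constructor; intros z Hz.
  pose proof (IN_EQ_r _ _ _ Hz Hy) as [a Ha]; simpl in Ha. eapply IH; exact Ha.
Qed.

Lemma IN_irrefl : forall x, ~ IN x x.
Proof.
  intros x H. pose proof (Acc_IN x x (EQ_refl x)) as Ac.
  induction Ac as [x _ IH]. eapply IH; eauto.
Qed.

Lemma IN_2cycle : forall x y, IN x y -> IN y x -> False.
Proof.
  intros x y H1 H2. pose proof (Acc_IN x x (EQ_refl x)) as Ac. revert y H1 H2.
  induction Ac as [x _ IH]. intros y H1 H2. eapply (IH y H2 x); eauto.
Qed.

Inductive hin (s : Ens) : Ens -> Prop :=
| hin_eq q : EQ q s -> hin s q
| hin_step q r : IN r q -> hin s r -> hin s q.

Lemma hin_EQ : forall s q q', hin s q -> EQ q q' -> hin s q'.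
Proof.
  intros s q q' H E; destruct H.
  - apply hin_eq; eapply EQ_trans; [apply EQ_sym|]; eauto.
  - eapply hin_step; [eapply IN_EQ_r; eauto | exact H0].
Qed.

Lemma hin_rk : forall s q, hin s q -> EQ (rk q) (rk s) \/ IN (rk s) (rk q).
Proof.
  intros s q H; induction H as [q E | q r Hr _ IH].
  - left; apply rk_EQ; exact E.
  - destruct (rk_IN _ _ Hr) as [A B]. right. destruct IH as [IH|IH].
    + eapply IN_EQ_l; eauto.
    + apply B; exact IH.
Qed.

Lemma hin_not_lt : forall s q, hin s q -> rk_lt q s -> False.
Proof.
  intros s q H L; unfold rk_lt in L. destruct (hin_rk _ _ H) as [E|I].
  - apply (IN_irrefl (rk s)); eapply IN_EQ_l; eauto.
  - eapply IN_2cycle; eauto.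
Qed.

Lemma IN_family : forall V (P : V -> Prop) F z, IN z (family P F) <-> exists u, P u /\ EQ z (F u).
Proof.
  intros; split.
  - intros [[u Hu] H]; exists u; split; assumption.
  - intros [u [Hu H]]; exists (exist _ u Hu); exact H.
Qed.

Lemma Mn_mono : forall V (M Mbar : V -> Ens) t s n x z, IN z (M x) -> IN z (Mn M Mbar t s n x).
Proof.
  intros V M Mbar t s n x z H; induction n; simpl;
  destruct (excluded_middle_informative _); try rewrite IN_union; auto.
Qed.

Lemma main : forall V (M Mbar : V -> Ens) t s n x q,
  IN q (Mn M Mbar t s n x) -> IN q (M x) \/ hin s q.
Proof.
  intros V M Mbar t s n; induction n as [|m IH]; intros x q H; simpl in H;
  destruct (excluded_middle_informative _) as [Hv|Hv]; auto.
  - rewrite IN_union, IN_singleton in H; destruct H as [H|H]; auto. right; apply hin_eq; exact H.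
  - rewrite IN_union, IN_family in H; destruct H as [H|[u [[Hu1 Hu2] E]]]; auto.
    destruct (classic (exists r, IN r (Mn M Mbar t s m u) /\ hin s r)) as [[r [Hr1 Hr2]]|Hno].
    + right; eapply hin_step; [eapply IN_EQ_r; [exact Hr1| apply EQ_sym; exact E] | exact Hr2].
    + left. assert (EQ (Mn M Mbar t s m u) (M u)) as E2.
      { apply ext; intros z Hz.
        - destruct (IH u z Hz) as [h|h]; auto. exfalso; apply Hno; eauto.
        - apply Mn_mono; exact Hz. }
      eapply IN_EQ_l; [exact Hu2|]. apply EQ_sym; eapply EQ_trans; eauto.
Qed.

Theorem lemma7 (V : Type) (phi : formula V)
  (Hvars : forall v : V, occurs v phi)
  (M : V -> Ens) (HM : sat M phi)
  (xb yb : V) (Mbar : V -> Ens) (HMbar : sat Mbar phi)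
  (Hneq : ~ EQ (Mbar xb) (Mbar yb))
  (t : Ens)
  (Ht : (IN t (Mbar xb) /\ ~ IN t (Mbar yb)) \/ (~ IN t (Mbar xb) /\ IN t (Mbar yb)))
  (s : Ens) (Hs : forall v : V, rk_lt (M v) s) :
  forall (x : V) (n : nat) (q : Ens),
    IN q (Mn M Mbar t s n x) -> rk_lt q s -> IN q (M x).
Proof.
  intros x n q H L. destruct (main V M Mbar t s n x q H) as [h|h]; auto.
  exfalso; eapply hin_not_lt; eauto.
Qed.
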